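(* Let $C^+$ be a mixed-characteristic valuation ring whose $p$-adic completion is a perfectoid ring, let $C^{+\flat}$ and $d\in C^{+\flat}$ be as in the context, let $E^+$ be a valuation ring extension of $C^+$, and let $E^{+\flat}$ be a $d$-adically complete flat $C^{+\flat}$-algebra. Assume there is an isomorphism of $C^{+\flat}/d=C^+/p$-algebras $E^{+\flat}/d\cong E^+/p$. Then $E^{+\flat}$ is a valuation ring extension of $C^{+\flat}$.
   Context: $p$ is a prime. A valuation ring $C^+$ is mixed-characteristic if $p$ is neither invertible nor zero in it. A valuation ring extension of a valuation ring $V$ is a valuation ring with an injective (equivalently flat) ring map from $V$. $C^{+\flat}:=\lim_{x\mapsto x^p}C^+/p$ is the tilt, a perfect valuation ring of characteristic $p$; one fixes $d\in C^{+\flat}$ such that $C^{+\flat}$ is $d$-adically complete and there is a natural ring isomorphism $C^+/p\cong C^{+\flat}/d$. *)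

(* Defs.v *)
From HB Require Import structures.
From mathcomp Require Import all_boot all_order all_algebra.
Set Implicit Arguments. Unset Strict Implicit. Unset Printing Implicit Defensive.
Import Order.TTheory GRing.Theory.
Local Open Scope ring_scope.

Definition rdvd (R : comNzRingType) (x y : R) : Prop := exists z : R, y = z * x.

Definition cong (R : comNzRingType) (a x y : R) : Prop := rdvd a (x - y).

(* Valuation ring: an integral domain in which, for all x y, x | y or y | x.
   (comNzRingType already gives 1 != 0.) *)
Definition valuation_ring (R : comNzRingType) : Prop :=
  (forall x y : R, x * y = 0 -> x = 0 \/ y = 0) /\
  (forall x y : R, rdvd x y \/ rdvd y x).

Definition mixed_char (p : nat) (R : comNzRingType) : Prop :=
  (p%:R : R) != 0 /\ ~ (exists u : R, (p%:R : R) * u = 1).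

(* a-adically complete (and separated): R -> lim R/a^n is bijective. *)
Definition adically_complete (R : comNzRingType) (a : R) : Prop :=
  (forall x : R, (forall n, rdvd (a ^+ n) x) -> x = 0) /\
  (forall s : nat -> R, (forall n, rdvd (a ^+ n) (s n.+1 - s n)) ->
     exists x : R, forall n, rdvd (a ^+ n) (x - s n)).

(* iota : C -> Chat exhibits Chat as the p-adic completion of C:
   Chat is p-adically complete and separated, and iota induces
   isomorphisms C/p^n ~= Chat/p^n for all n.  (This characterizes
   lim_n C/p^n up to unique isomorphism.) *)
Definition is_p_completion (p : nat) (C Chat : comNzRingType)
    (iota : {rmorphism C -> Chat}) : Prop :=
  adically_complete (p%:R : Chat) /\
  (forall n (x : C), rdvd ((p%:R : Chat) ^+ n) (iota x) <-> rdvd ((p%:R : C) ^+ n) x) /\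
  (forall n (y : Chat), exists x : C, cong ((p%:R : Chat) ^+ n) y (iota x)).

(* Perfectoid ring (BMS, Def. 3.5), in the form of BMS Lemma 3.10 valid
   for p-torsion-free rings: there is pi with pi^p | p,
   S is pi-adically complete, and Frobenius S/pi -> S/pi^p is bijective. *)
Definition perfectoid_tf (p : nat) (S : comNzRingType) : Prop :=
  exists pi : S,
    rdvd (pi ^+ p) (p%:R : S) /\ adically_complete pi /\
    (forall x y : S, cong (pi ^+ p) (x ^+ p) (y ^+ p) -> cong pi x y) /\
    (forall y : S, exists x : S, cong (pi ^+ p) (x ^+ p) y).

(* pr : nat -> Cb -> C exhibits Cb as the tilt lim_{x |-> x^p} C/p:
   each pr n is (a set-theoretic lift of) a ring map Cb -> C/p, the maps
   are compatible along Frobenius, and x |-> (pr n x mod p)_n is a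
   bijection of Cb onto the set of Frobenius-compatible sequences in C/p. *)
Definition is_tilt (p : nat) (C Cb : comNzRingType) (pr : nat -> Cb -> C) : Prop :=
  let P := (p%:R : C) in
  (forall n x y, cong P (pr n (x + y)) (pr n x + pr n y)) /\
  (forall n x y, cong P (pr n (x * y)) (pr n x * pr n y)) /\
  (forall n, cong P (pr n 1) 1) /\
  (forall n x, cong P (pr n.+1 x ^+ p) (pr n x)) /\
  (forall x y, (forall n, cong P (pr n x) (pr n y)) -> x = y) /\
  (forall s : nat -> C, (forall n, cong P (s n.+1 ^+ p) (s n)) ->
     exists x, forall n, cong P (pr n x) (s n)).

(* The natural map Cb -> C/p, x |-> pr 0 x, is surjective with kernel dCb,
   i.e. it induces the natural isomorphism Cb/d ~= C/p. *)
Definition tilt_iso (p : nat) (C Cb : comNzRingType) (pr : nat -> Cb -> C) (d : Cb) : Prop :=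
  (forall x : Cb, rdvd (p%:R : C) (pr 0%N x) <-> rdvd d x) /\
  (forall c : C, exists x : Cb, cong (p%:R : C) (pr 0%N x) c).

(* Flatness of Eb over Cb via j, by the equational criterion
   (Stacks 00HK): every relation sum_i a_i m_i = 0 is trivial. *)
Definition flat_over (Cb Eb : comNzRingType) (j : {rmorphism Cb -> Eb}) : Prop :=
  forall n (a : 'I_n -> Cb) (m : 'I_n -> Eb),
    \sum_(i < n) j (a i) * m i = 0 ->
    exists k (b : 'I_n -> 'I_k -> Cb) (y : 'I_k -> Eb),
      (forall i, m i = \sum_(l < k) j (b i l) * y l) /\
      (forall l, \sum_(i < n) a i * b i l = 0).

(* phi : Eb -> E is (a set-theoretic lift of) an isomorphism of
   Cb/d = C/p - algebras  Eb/d ~= E/p, where Eb/d is a Cb/d-algebra via j,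
   E/p is a C/p-algebra via i, and Cb/d = C/p via pr 0. *)
Definition quot_alg_iso (p : nat) (C Cb E Eb : comNzRingType)
    (pr : nat -> Cb -> C) (i : {rmorphism C -> E}) (j : {rmorphism Cb -> Eb})
    (d : Cb) (phi : Eb -> E) : Prop :=
  let P := (p%:R : E) in
  (forall x y, cong P (phi (x + y)) (phi x + phi y)) /\
  (forall x y, cong P (phi (x * y)) (phi x * phi y)) /\
  cong P (phi 1) 1 /\
  (forall c : Cb, cong P (phi (j c)) (i (pr 0%N c))) /\
  (forall x : Eb, rdvd P (phi x) <-> rdvd (j d) x) /\
  (forall e : E, exists x : Eb, cong P (phi x) e).

(* Main.v *)
Require Import Defs.
From HB Require Import structures.
From mathcomp Require Import all_boot all_order all_algebra.
From mathcomp Require Import ring.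
From Stdlib Require Import Classical.
Import GRing.Theory.
Local Open Scope ring_scope.

Lemma rdvd_refl {R : comNzRingType} (a : R) : rdvd a a.
Proof. by exists 1; rewrite mul1r. Qed.
Lemma rdvd0 {R : comNzRingType} (a : R) : rdvd a 0.
Proof. by exists 0; rewrite mul0r. Qed.
Lemma rdvd_trans {R : comNzRingType} (a b c : R) : rdvd a b -> rdvd b c -> rdvd a c.
Proof. by move=> [x ->] [y ->]; exists (y * x); rewrite mulrA. Qed.
Lemma rdvd_mull {R : comNzRingType} (a b c : R) : rdvd a b -> rdvd a (c * b).
Proof. by move=> [x ->]; exists (c * x); rewrite mulrA. Qed.
Lemma rdvd_mulr {R : comNzRingType} (a b c : R) : rdvd a b -> rdvd a (b * c).
Proof. by move=> H; rewrite mulrC; apply: rdvd_mull. Qed.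
Lemma rdvd_add {R : comNzRingType} (a b c : R) : rdvd a b -> rdvd a c -> rdvd a (b + c).
Proof. by move=> [x ->] [y ->]; exists (x + y); rewrite mulrDl. Qed.
Lemma rdvd_opp {R : comNzRingType} (a b : R) : rdvd a b -> rdvd a (- b).
Proof. by move=> [x ->]; exists (- x); rewrite mulNr. Qed.
Lemma rdvd_sub {R : comNzRingType} (a b c : R) : rdvd a b -> rdvd a c -> rdvd a (b - c).
Proof. by move=> H1 H2; apply: rdvd_add => //; apply: rdvd_opp. Qed.
Lemma rdvd_self_mul {R : comNzRingType} (a b : R) : rdvd a (b * a).
Proof. by exists b. Qed.
Lemma rdvd_exp {R : comNzRingType} (a : R) m n : (m <= n)%N -> rdvd (a ^+ m) (a ^+ n).
Proof. by move=> H; exists (a ^+ (n - m)); rewrite -exprD subnK. Qed.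

Lemma cong_refl {R : comNzRingType} (a x : R) : cong a x x.
Proof. by rewrite /cong subrr; apply: rdvd0. Qed.
Lemma cong_sym {R : comNzRingType} (a x y : R) : cong a x y -> cong a y x.
Proof. by rewrite /cong => H; rewrite -opprB; apply: rdvd_opp. Qed.
Lemma cong_trans {R : comNzRingType} (a x y z : R) : cong a x y -> cong a y z -> cong a x z.
Proof. rewrite /cong => H1 H2; have -> : x - z = (x - y) + (y - z) by ring. by apply: rdvd_add. Qed.
Lemma cong_add {R : comNzRingType} (a x y u v : R) : cong a x y -> cong a u v -> cong a (x + u) (y + v).
Proof. rewrite /cong => H1 H2; have -> : x + u - (y + v) = (x - y) + (u - v) by ring. by apply: rdvd_add. Qed.
Lemma cong_opp {R : comNzRingType} (a x y : R) : cong a x y -> cong a (- x) (- y).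
Proof. rewrite /cong => H1; have -> : - x - - y = - (x - y) by ring. by apply: rdvd_opp. Qed.
Lemma cong_mul {R : comNzRingType} (a x y u v : R) : cong a x y -> cong a u v -> cong a (x * u) (y * v).
Proof. rewrite /cong => H1 H2; have -> : x * u - y * v = (x - y) * u + y * (u - v) by ring.
by apply: rdvd_add; [apply: rdvd_mulr | apply: rdvd_mull]. Qed.
Lemma cong_exp {R : comNzRingType} (a x y : R) n : cong a x y -> cong a (x ^+ n) (y ^+ n).
Proof. move=> H; elim: n => [|n IH]; first by apply: cong_refl.
by rewrite !exprS; apply: cong_mul. Qed.
Lemma cong0 {R : comNzRingType} (a x : R) : cong a x 0 <-> rdvd a x.
Proof. by rewrite /cong subr0. Qed.
Lemma cong_rdvd {R : comNzRingType} (a x y : R) : cong a x y -> rdvd a y -> rdvd a x.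
Proof. rewrite /cong => H1 H2; have -> : x = (x - y) + y by ring. by apply: rdvd_add. Qed.

Definition isdom (R : comNzRingType) := forall x y : R, x * y = 0 -> x = 0 \/ y = 0.
Lemma dom_cancel {R : comNzRingType} (H : isdom R) (a x y : R) : a != 0 -> a * x = a * y -> x = y.
Proof. move=> /eqP a0 E; have : a * (x - y) = 0 by rewrite mulrBr E subrr.
by case/H => // /eqP; rewrite subr_eq0 => /eqP. Qed.
Lemma dom_exp {R : comNzRingType} (H : isdom R) (a : R) n : a != 0 -> a ^+ n != 0.
Proof. move=> a0; elim: n => [|n IH]; first by rewrite expr0 oner_eq0.
rewrite exprS; apply/eqP; case/H; by [move/eqP: a0 | move/eqP: IH]. Qed.
Arguments rdvd_trans {R a b c}.
Arguments rdvd_mull {R a b} c.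
Arguments rdvd_mulr {R a b} c.
Arguments rdvd_add {R a b c}.
Arguments rdvd_opp {R a b}.
Arguments rdvd_sub {R a b c}.
Arguments cong_sym {R a x y}.
Arguments cong_trans {R a x y z}.
Arguments cong_add {R a x y u v}.
Arguments cong_opp {R a x y}.
Arguments cong_mul {R a x y u v}.
Arguments cong_exp {R a x y} n.
Arguments cong_rdvd {R a x y}.
Arguments dom_cancel {R} H {a x y}.
Definition unitp {R : comNzRingType} (x : R) := exists u, x * u = 1.

Lemma val_dom {R : comNzRingType} : valuation_ring R -> isdom R.
Proof. by case. Qed.

Lemma val_1plus {R : comNzRingType} (HV : valuation_ring R) (m : R) :
  ~ unitp m -> unitp (1 + m).
Proof.
move=> Hm; case: HV => _ /(_ (1 + m) m) [[z Hz]|[z Hz]].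
  by exists (1 - z); rewrite mulrC mulrBl mul1r -Hz; ring.
by case: Hm; exists (z - 1); rewrite mulrBr mulr1 mulrC -Hz; ring.
Qed.

Lemma nonunit_mul {R : comNzRingType} (a b : R) : ~ unitp a -> ~ unitp (b * a).
Proof. by move=> H [u Hu]; apply: H; exists (b * u); rewrite -Hu; ring. Qed.

Lemma L3 (C : comNzRingType) (HV : valuation_ring C) (p : nat) (hp : (1 < p)%N)
  (p0 : (p%:R : C) != 0) (pnu : ~ unitp (p%:R : C)) (u u' v v' : C) :
  ~ rdvd (p%:R : C) u -> ~ rdvd (p%:R : C) v ->
  cong (p%:R : C) (u' ^+ p) u -> cong (p%:R : C) (v' ^+ p) v ->
  ~ rdvd (p%:R : C) (u' * v').
Proof.
set P := (p%:R : C) => Hu Hv [t Ht] [s Hs] [w Hw].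
have [a Ha] : rdvd u P.
  by case: (proj2 HV u P) => // H; case: Hu.
have [b Hb] : rdvd v P.
  by case: (proj2 HV v P) => // H; case: Hv.
have na : ~ unitp a.
  by move=> [g Hg]; apply: Hu; exists g; transitivity (u * (a * g)); [by rewrite Hg mulr1 | rewrite Ha; ring].
have nb : ~ unitp b.
  by move=> [g Hg]; apply: Hv; exists g; transitivity (v * (b * g)); [by rewrite Hg mulr1 | rewrite Hb; ring].
have [U HU] := @val_1plus _ HV _ (@nonunit_mul _ a t na).
have [V HV'] := @val_1plus _ HV _ (@nonunit_mul _ b s nb).
have E1 : u' ^+ p = u * (1 + t * a).
  by rewrite -[u' ^+ p](subrK u) Ht Ha; ring.
have E2 : v' ^+ p = v * (1 + s * b).
  by rewrite -[v' ^+ p](subrK v) Hs Hb; ring.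
have Pp : P ^+ p = P ^+ 2 * P ^+ (p - 2) by rewrite -exprD subnKC.
have E3 : P ^+ 2 * ((1 + t * a) * (1 + s * b)) = P ^+ 2 * (a * b * w ^+ p * P ^+ (p - 2)).
  have : (u' * v') ^+ p = (w * P) ^+ p by rewrite Hw.
  rewrite !exprMn E1 E2 Pp => E.
  have -> : P ^+ 2 * ((1 + t * a) * (1 + s * b)) = a * b * (u * (1 + t * a) * (v * (1 + s * b))).
    by rewrite expr2 {1}Ha Hb; ring.
  by rewrite E; ring.
have E4 := dom_cancel (val_dom HV) (dom_exp (val_dom HV) _ 2 p0) E3.
apply: na; exists (b * w ^+ p * P ^+ (p - 2) * U * V).
have -> : a * (b * w ^+ p * P ^+ (p - 2) * U * V) = (a * b * w ^+ p * P ^+ (p - 2)) * U * V by ring.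
rewrite -E4; transitivity (((1 + t * a) * U) * ((1 + s * b) * V)); [ring | by rewrite HU HV' mulr1].
Qed.
Lemma rdvd_expn {R : comNzRingType} (a y : R) n : rdvd a y -> (0 < n)%N -> rdvd a (y ^+ n).
Proof. by case: n => // n H _; rewrite exprS; apply: rdvd_mulr. Qed.

Lemma pr_zero {p : nat} {C Cb : comNzRingType} {pr : nat -> Cb -> C} :
  is_tilt p pr -> forall n, rdvd (p%:R : C) (pr n 0).
Proof.
move=> [Hadd _] n; have := Hadd n 0 0; rewrite addr0 /cong => H.
have -> : pr n 0 = - (pr n 0 - (pr n 0 + pr n 0)) by ring.
by apply: rdvd_opp.
Qed.

Lemma pr_exp {p : nat} {C Cb : comNzRingType} {pr : nat -> Cb -> C} :
  is_tilt p pr -> forall n x k, cong (p%:R : C) (pr n (x ^+ k)) (pr n x ^+ k).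
Proof.
move=> [_ [Hmul [H1 _]]] n x; elim => [|k IH]; first by rewrite !expr0.
rewrite !exprS; apply: cong_trans (Hmul _ _ _) _; apply: cong_mul => //; apply: cong_refl.
Qed.

Lemma tilt_reduced {p : nat} {C Cb : comNzRingType} {pr : nat -> Cb -> C} :
  is_tilt p pr -> forall b : Cb, b ^+ p = 0 -> b = 0.
Proof.
move=> Ht b Hb; have Ht' := Ht; case: Ht' => [_ [_ [_ [Hfr [Hinj _]]]]].
apply: Hinj => n; apply: cong_trans (cong_sym (Hfr n b)) _.
apply: cong_trans (cong_sym (pr_exp Ht _ _ _)) _; rewrite Hb.
apply: cong_trans; first by apply/cong0; apply: (pr_zero Ht).
by apply: cong_sym; apply/cong0; apply: (pr_zero Ht).
Qed.

Lemma pr_down1 {p : nat} {C Cb : comNzRingType} {pr : nat -> Cb -> C} :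
  (0 < p)%N -> is_tilt p pr -> forall m x, rdvd (p%:R : C) (pr m.+1 x) -> rdvd (p%:R : C) (pr m x).
Proof.
move=> p0 [_ [_ [_ [Hfr _]]]] m x H.
by apply: cong_rdvd (cong_sym (Hfr m x)) _; apply: rdvd_expn.
Qed.

Lemma pr_down {p : nat} {C Cb : comNzRingType} {pr : nat -> Cb -> C} :
  (0 < p)%N -> is_tilt p pr -> forall n m x, (n <= m)%N ->
  rdvd (p%:R : C) (pr m x) -> rdvd (p%:R : C) (pr n x).
Proof.
move=> p0 Ht n; elim => [|m IH] x.
  by rewrite leqn0 => /eqP ->.
rewrite leq_eqVlt => /orP [/eqP -> //|Hnm] H.
by apply: IH => //; apply: pr_down1 H.
Qed.

Lemma pr_witness {p : nat} {C Cb : comNzRingType} {pr : nat -> Cb -> C} :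
  is_tilt p pr -> forall x, x <> 0 -> exists N, ~ rdvd (p%:R : C) (pr N x).
Proof.
move=> Ht x Hx; apply: NNPP => Hn; apply: Hx.
have Ht' := Ht; case: Ht' => [_ [_ [_ [_ [Hinj _]]]]].
apply: Hinj => n; apply: cong_trans (_ : cong _ _ 0) _.
  by apply/cong0; apply: NNPP => H; apply: Hn; exists n.
by apply: cong_sym; apply/cong0; apply: (pr_zero Ht).
Qed.

Lemma tilt_dom {p : nat} {C Cb : comNzRingType} {pr : nat -> Cb -> C} :
  (1 < p)%N -> valuation_ring C -> mixed_char p C -> is_tilt p pr -> isdom Cb.
Proof.
move=> p1 HV [p0 pnu] Ht x y Hxy.
have Ht' := Ht; case: Ht' => [_ [Hmul [_ [Hfr _]]]].
have p0' : (0 < p)%N by apply: ltnW.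
case: (classic (x = 0)) => [|Hx]; first by left.
case: (classic (y = 0)) => [|Hy]; first by right.
have [N HN] := pr_witness Ht _ Hx; have [M HM] := pr_witness Ht _ Hy.
set K := maxn N M.
have HK1 : ~ rdvd (p%:R : C) (pr K x).
  by move=> H; apply: HN; apply: pr_down H => //; apply: leq_maxl.
have HK2 : ~ rdvd (p%:R : C) (pr K y).
  by move=> H; apply: HM; apply: pr_down H => //; apply: leq_maxr.
have HL := (@L3 C HV p p1 p0 pnu _ _ _ _ HK1 HK2 (Hfr K x) (Hfr K y)); exfalso; apply: HL.
apply: cong_rdvd (cong_sym (Hmul K.+1 x y)) _; rewrite Hxy; apply: (pr_zero Ht).
Qed.

Lemma tilt_root {p : nat} {C Cb : comNzRingType} {pr : nat -> Cb -> C} :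
  is_tilt p pr -> forall x : Cb, exists y, y ^+ p = x.
Proof.
move=> Ht x; have Ht' := Ht; case: Ht' => [_ [_ [_ [Hfr [Hinj Hsurj]]]]].
have [y Hy] := Hsurj (fun n => pr n.+1 x) (fun n => Hfr n.+1 x).
exists y; apply: Hinj => n.
apply: cong_trans (pr_exp Ht _ _ _) _.
apply: cong_trans (cong_exp _ (Hy n)) _.
exact: Hfr.
Qed.
Lemma d_nonzero (p : nat) (p1 : (1 < p)%N)
  (C : comNzRingType) (HC : valuation_ring C) (Hmix : mixed_char p C)
  (Chat : comNzRingType) (iota : {rmorphism C -> Chat})
  (Hcompl : is_p_completion p iota) (Hperf : perfectoid_tf p Chat)
  (Cb : comNzRingType) (pr : nat -> Cb -> C) (Htilt : is_tilt p pr)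
  (d : Cb) (Hnat : tilt_iso p pr d) : d != 0.
Proof.
case: Hmix => p0 pnu.
case: Hcompl => [_ [Hc2 Hc3]].
case: Hperf => [pi [[a Ha] [[Hpisep _] _]]].
have p0' : (0 < p)%N by apply: ltnW.
have F1 : ~ rdvd ((p%:R : Chat) ^+ 2) (p%:R : Chat).
  move=> H; have := (Hc2 2%N (p%:R : C)).1; rewrite rmorph_nat => /(_ H) [z Hz].
  apply: pnu; exists z.
  apply: (dom_cancel (val_dom HC) p0); rewrite mulr1 [RHS]Hz; ring.
have F2 : ~ rdvd (p%:R : Chat) pi.
  move=> [b Hb]; apply: F1; exists (a * b ^+ p * (p%:R : Chat) ^+ (p - 2)).
  rewrite {1}Ha Hb exprMn.
  have -> : (p%:R : Chat) ^+ p = (p%:R : Chat) ^+ (p - 2) * (p%:R : Chat) ^+ 2.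
    by rewrite -exprD subnK.
  ring.
have [c Hc] := Hc3 1%N pi; rewrite expr1 in Hc.
have Hcn : ~ rdvd (p%:R : C) c.
  move=> H; apply: F2; have := (Hc2 1%N c).2; rewrite !expr1 => /(_ H) H'.
  exact: cong_rdvd Hc H'.
have F3 : exists N, rdvd (p%:R : C) (c ^+ N).
  apply: NNPP => Hn; apply: F1; suff -> : (p%:R : Chat) = 0 by apply: rdvd0.
  apply: Hpisep => n.
  have [al Hal] : rdvd (c ^+ n) (p%:R : C).
    case: (proj2 HC (c ^+ n) (p%:R : C)) => // H; case: Hn; by exists n.
  case: Hc => t Ht.
  have Hic : iota c = pi * (1 - t * a * pi ^+ p.-1).
    have -> : iota c = pi - (pi - iota c) by ring.
    rewrite Ht {1}Ha -{1}(prednK p0') exprS; ring.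
  exists (iota al * (1 - t * a * pi ^+ p.-1) ^+ n).
  have := congr1 iota Hal; rewrite rmorph_nat rmorphM rmorphXn Hic exprMn => ->; ring.
case: F3 => N HN.
apply/eqP => Hd0.
have Hred : forall y : C, rdvd (p%:R : C) (y ^+ p) -> rdvd (p%:R : C) y.
  move=> y Hy; case: Hnat => Hker Hsurj.
  have [x Hx] := Hsurj y.
  have H1 : rdvd (p%:R : C) (pr 0%N (x ^+ p)).
    apply: cong_rdvd (pr_exp Htilt _ _ _) _.
    exact: cong_rdvd (cong_exp _ Hx) Hy.
  have := (Hker _).1 H1; rewrite Hd0 => -[z]; rewrite mulr0 => /(tilt_reduced Htilt) Hx0.
  rewrite Hx0 in Hx; exact: cong_rdvd (cong_sym Hx) (pr_zero Htilt 0%N).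
have Hk : forall k, rdvd (p%:R : C) (c ^+ (p ^ k)) -> rdvd (p%:R : C) c.
  elim => [|k IH]; first by rewrite expn0 expr1.
  by rewrite expnSr exprM => /Hred.
apply: Hcn; apply: (Hk N); apply: rdvd_trans HN _; apply: rdvd_exp.
by apply: ltnW; apply: ltn_expl.
Qed.
Lemma adic_unit {R : comNzRingType} (D : R) : adically_complete D ->
  forall b, unitp (1 - D * b).
Proof.
move=> [Hsep Hcpl] b.
set s := fun n => \sum_(k < n) (D * b) ^+ k.
have [u Hu] : exists u, forall n, rdvd (D ^+ n) (u - s n).
  apply: Hcpl => n; rewrite /s big_ord_recr /= addrAC subrr add0r exprMn.
  by apply: rdvd_mulr; apply: rdvd_refl.
exists u; apply/eqP; rewrite -subr_eq0; apply/eqP; apply: Hsep => n.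
have Hs : (1 - D * b) * s n = 1 - (D * b) ^+ n.
  have := subrX1 (D * b) n; rewrite /s => E.
  have -> : 1 - D * b = - (D * b - 1) by ring.
  by rewrite mulNr -E opprB.
have -> : (1 - D * b) * u - 1 = (1 - D * b) * (u - s n) - (1 - (1 - D * b) * s n) by ring.
rewrite Hs; apply: rdvd_sub; first by apply: rdvd_mull.
have -> : 1 - (1 - (D * b) ^+ n) = (D * b) ^+ n by ring.
by rewrite exprMn; apply: rdvd_mulr; apply: rdvd_refl.
Qed.

Lemma tf_exp {R : comNzRingType} (D : R) : (forall z, D * z = 0 -> z = 0) ->
  forall n z, D ^+ n * z = 0 -> z = 0.
Proof.
move=> H; elim => [|n IH] z; first by rewrite expr0 mul1r.
by rewrite exprSr -mulrA => /IH /H.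
Qed.

Lemma decomp {R : comNzRingType} (D : R) : adically_complete D ->
  forall x, x <> 0 -> exists n x', x = D ^+ n * x' /\ ~ rdvd D x'.
Proof.
move=> [Hsep _] x Hx.
have [N HN] : exists N, ~ rdvd (D ^+ N) x.
  by apply: NNPP => H; apply: Hx; apply: Hsep => n; apply: NNPP => H'; apply: H; exists n.
elim: N x HN {Hx} => [|N IH] x HN.
  by exfalso; apply: HN; exists x; rewrite expr0 mulr1.
case: (classic (rdvd D x)) => [[x1 Hx1]|Hnd]; last by exists 0%N, x; rewrite expr0 mul1r.
have HN1 : ~ rdvd (D ^+ N) x1.
  by move=> [z Hz]; apply: HN; exists z; rewrite Hx1 Hz exprSr mulrA.
have [n [x' [E1 E2]]] := IH x1 HN1.
by exists n.+1, x'; split => //; rewrite Hx1 E1 exprS; ring.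
Qed.

Lemma lift {E Eb : comNzRingType} (P : E) (D : Eb) (phi : Eb -> E)
  (Hadd : forall x y, cong P (phi (x + y)) (phi x + phi y))
  (Hmul : forall x y, cong P (phi (x * y)) (phi x * phi y))
  (Hker : forall x, rdvd P (phi x) <-> rdvd D x)
  (Hsurj : forall e, exists x, cong P (phi x) e) :
  forall a b e, cong P (phi b) (e * phi a) -> exists w t, b = w * a + t * D.
Proof.
move=> a b e H.
have [w Hw] := Hsurj e.
have H1 : cong P (phi (w * a)) (phi b).
  apply: cong_trans (Hmul _ _) _; apply: cong_trans (cong_sym H).
  by apply: cong_mul => //; apply: cong_refl.
have H2 : rdvd P (phi (b - w * a)).
  have := Hadd (b - w * a) (w * a); rewrite subrK => H3.
  have H4 : cong P (phi (b - w * a)) (phi b - phi (w * a)).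
    move: H3; rewrite /cong => H3.
    have -> : phi (b - w * a) - (phi b - phi (w * a)) = - (phi b - (phi (b - w * a) + phi (w * a))) by ring.
    by apply: rdvd_opp.
  have H5 : rdvd P (phi b - phi (w * a)).
    move: H1; rewrite /cong => H1.
    have -> : phi b - phi (w * a) = - (phi (w * a) - phi b) by ring.
    by apply: rdvd_opp.
  exact: (cong_rdvd H4 H5).
have [t Ht] := (Hker _).1 H2.
by exists w, t; rewrite -Ht; ring.
Qed.

Lemma key {E Eb : comNzRingType} (HE : valuation_ring E) (p : nat) (p1 : (1 < p)%N)
  (P : E) (D D1 : Eb) (phi : Eb -> E)
  (Hadd : forall x y, cong P (phi (x + y)) (phi x + phi y))
  (Hmul : forall x y, cong P (phi (x * y)) (phi x * phi y))
  (Hker : forall x, rdvd P (phi x) <-> rdvd D x)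
  (Hsurj : forall e, exists x, cong P (phi x) e)
  (HD : adically_complete D) (HD1 : D1 ^+ p = D) (dl : E) (Hdl : cong P (phi D1) dl) :
  forall x, ~ rdvd D x -> rdvd x D.
Proof.
have Hlift := @lift _ _ P D phi Hadd Hmul Hker Hsurj.
move: p p1 HD1 => [|[|q]] // _ HD1.
have unit1 : forall s, unitp (1 + s * D1).
  move=> s; have [u Hu] := @adic_unit _ D HD ((- s) ^+ q.+2).
  have EX := subrX1 ((- s) * D1) q.+2.
  exists ((\sum_(i < q.+2) ((- s) * D1) ^+ i) * u).
  rewrite mulrA.
  have -> : (1 + s * D1) * (\sum_(i < q.+2) ((- s) * D1) ^+ i) = - (((- s) * D1) - 1) * (\sum_(i < q.+2) ((- s) * D1) ^+ i) by congr (_ * _); ring.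
  rewrite mulNr -EX exprMn HD1 opprB.
  by rewrite (mulrC _ D).
move=> x Hx.
have Hind : forall k, (k <= q.+2)%N -> rdvd x D \/ exists y, x = D1 ^+ k * y.
  elim => [|k IH] Hk; first by right; exists x; rewrite expr0 mul1r.
  case: (IH (ltnW Hk)) => [|[y Hy]]; first by left.
  case: (proj2 HE (phi y) dl) => [[e He]|[e He]].
  - (* dl = e * phi y : y divides D1 *)
    have [w [t Hwt]] : exists w t, D1 = w * y + t * D by apply: (Hlift y D1 e); rewrite -He.
    have [v Hv] := unit1 (- t * D1 ^+ q).
    left.
    have HyD1 : D1 = (w * v) * y.
      have E1 : D1 * (1 + - t * D1 ^+ q * D1) = w * y.
        rewrite -HD1 in Hwt.
        have -> : w * y = D1 - t * D1 ^+ q.+2 by apply/eqP; rewrite eq_sym subr_eq -Hwt.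
        rewrite !exprS; ring.
      transitivity (D1 * ((1 + - t * D1 ^+ q * D1) * v)); first by rewrite Hv mulr1.
      by rewrite mulrA E1; ring.
    apply: rdvd_trans (_ : rdvd x (D1 ^+ k.+1)) _.
      by exists (w * v); rewrite Hy exprS [X in X * D1 ^+ k]HyD1; ring.
    by rewrite -HD1; apply: rdvd_exp.
  - (* phi y = e * dl : D1 divides y *)
    have Hc : cong P (phi y) (e * dl) by rewrite He; apply: cong_refl.
    have [w [t Hwt]] := Hlift D1 y e (cong_trans Hc (cong_mul (cong_refl P e) (cong_sym Hdl))).
    right; exists (w + t * D1 ^+ q.+1).
    by rewrite Hy Hwt -HD1 !exprS; ring.
case: (Hind q.+2 (leqnn _)) => // [[y Hy]].
by exfalso; apply: Hx; exists y; rewrite Hy HD1 mulrC.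
Qed.
Lemma eb_val {E Eb : comNzRingType} (HE : valuation_ring E) (p : nat) (p1 : (1 < p)%N)
  (P : E) (D D1 : Eb) (phi : Eb -> E)
  (Hadd : forall x y, cong P (phi (x + y)) (phi x + phi y))
  (Hmul : forall x y, cong P (phi (x * y)) (phi x * phi y))
  (Hker : forall x, rdvd P (phi x) <-> rdvd D x)
  (Hsurj : forall e, exists x, cong P (phi x) e)
  (HD : adically_complete D) (HD1 : D1 ^+ p = D) (dl : E) (Hdl : cong P (phi D1) dl)
  (TF : forall z, D * z = 0 -> z = 0) : valuation_ring Eb.
Proof.
have Hkey := @key _ _ HE p p1 P D D1 phi Hadd Hmul Hker Hsurj HD HD1 dl Hdl.
have Hlift := @lift _ _ P D phi Hadd Hmul Hker Hsurj.
have aux : forall n x' y'', ~ rdvd D x' ->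
    rdvd (D ^+ n * x') (D ^+ n * y'') \/ rdvd (D ^+ n * y'') (D ^+ n * x').
  move=> n x' y'' Hx'.
  case: (proj2 HE (phi x') (phi y'')) => [[e He]|[e He]].
  - have [w [t Hwt]] : exists w t, y'' = w * x' + t * D by apply: (Hlift x' y'' e); rewrite He; apply: cong_refl.
    have [s Hs] := Hkey x' Hx'.
    left; exists (w + t * s); rewrite Hwt [X in t * X]Hs; ring.
  - have [w [t Hwt]] : exists w t, x' = w * y'' + t * D by apply: (Hlift y'' x' e); rewrite He; apply: cong_refl.
    have Hy : ~ rdvd D y''.
      move=> [z Hz]; apply: Hx'; exists (w * z + t); rewrite Hwt Hz; ring.
    have [s Hs] := Hkey y'' Hy.
    right; exists (w + t * s); rewrite Hwt [X in t * X]Hs; ring.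
split.
- move=> x y Hxy.
  case: (classic (x = 0)) => [|Hx]; first by left.
  case: (classic (y = 0)) => [|Hy]; first by right.
  have [n [x' [Ex Hx']]] := @decomp _ D HD x Hx.
  have [m [y' [Ey Hy']]] := @decomp _ D HD y Hy.
  have Hxy' : x' * y' = 0.
    apply: (@tf_exp _ D TF (n + m)); rewrite -Hxy Ex Ey exprD; ring.
  have [s Hs] := Hkey x' Hx'.
  exfalso; apply: Hy'; suff -> : y' = 0 by apply: rdvd0.
  apply: TF; rewrite Hs -mulrA Hxy'; ring.
- move=> x y.
  case: (classic (x = 0)) => [->|Hx]; first by right; exists 0; rewrite mul0r.
  case: (classic (y = 0)) => [->|Hy]; first by left; exists 0; rewrite mul0r.
  have [n [x' [Ex Hx']]] := @decomp _ D HD x Hx.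
  have [m [y' [Ey Hy']]] := @decomp _ D HD y Hy.
  case: (leqP n m) => Hnm.
  + have Ey2 : y = D ^+ n * (D ^+ (m - n) * y') by rewrite Ey mulrA -exprD subnKC.
    by rewrite Ex Ey2; apply: aux.
  + have Ex2 : x = D ^+ m * (D ^+ (n - m) * x') by rewrite Ex mulrA -exprD subnKC // ltnW.
    by rewrite Ex2 Ey; case: (aux m y' (D ^+ (n - m) * x') Hy') => H; [right | left].
Qed.

Lemma flat_tf {Cb Eb : comNzRingType} (j : {rmorphism Cb -> Eb}) (Hflat : flat_over j)
  (Hdom : isdom Cb) (d : Cb) (d0 : d != 0) : forall z, j d * z = 0 -> z = 0.
Proof.
move=> z Hz.
have := Hflat 1%N (fun _ => d) (fun _ => z); rewrite big_ord1 => /(_ Hz) [k [b [y [Hm Ha]]]].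
rewrite (Hm ord0); apply: big1 => l _.
have := Ha l; rewrite big_ord1 => /Hdom [/eqP|->]; first by rewrite (negbTE d0).
by rewrite rmorph0 mul0r.
Qed.

Lemma flat_inj {Cb Eb : comNzRingType} (j : {rmorphism Cb -> Eb}) (Hflat : flat_over j)
  (Hdom : isdom Cb) : injective j.
Proof.
move=> x y Hxy; apply: NNPP => Hne.
have Ha : j (x - y) * 1 = 0 by rewrite rmorphB Hxy subrr mul0r.
have := Hflat 1%N (fun _ => x - y) (fun _ => 1); rewrite big_ord1 => /(_ Ha) [k [b [z [Hm Hb]]]].
have := Hm ord0; rewrite big1 => [/eqP|l _]; first by rewrite oner_eq0.
have := Hb l; rewrite big_ord1 => /Hdom [/eqP|->]; last by rewrite rmorph0 mul0r.
by rewrite subr_eq0 => /eqP.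
Qed.

Theorem lemma3p13 (p : nat) (hp : prime p)
  (C : comNzRingType) (HC : valuation_ring C) (Hmix : mixed_char p C)
  (Chat : comNzRingType) (iota : {rmorphism C -> Chat})
  (Hcompl : is_p_completion p iota) (Hperf : perfectoid_tf p Chat)
  (Cb : comNzRingType) (pr : nat -> Cb -> C) (Htilt : is_tilt p pr)
  (d : Cb) (Hd : adically_complete d) (Hnat : tilt_iso p pr d)
  (E : comNzRingType) (i : {rmorphism C -> E}) (HE : valuation_ring E)
  (Hi : injective i)
  (Eb : comNzRingType) (j : {rmorphism Cb -> Eb}) (Hflat : flat_over j)
  (HEb : adically_complete (j d))
  (Hiso : exists phi : Eb -> E, quot_alg_iso p pr i j d phi) :
  valuation_ring Eb /\ injective j.
Proof.
have p1 := prime_gt1 hp.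
have Cdom := tilt_dom p1 HC Hmix Htilt.
have d0 := @d_nonzero p p1 C HC Hmix Chat iota Hcompl Hperf Cb pr Htilt d Hnat.
have [d1 Hd1] := tilt_root Htilt d.
case: Hiso => phi [Hadd [Hmul [_ [Hjc [Hker Hsurj]]]]].
split; last by apply: flat_inj.
have HD1 : (j d1) ^+ p = j d by rewrite -rmorphXn Hd1.
exact: (@eb_val E Eb HE p p1 _ (j d) (j d1) phi Hadd Hmul Hker Hsurj HEb HD1 _ (Hjc d1) (flat_tf j Hflat Cdom d d0)).
Qed.
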